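(* For all $\alpha,\beta\in\mathbb{R}$ and all $f\in C_0^\infty((0,\infty))$ (complex-valued), with $\mathbf C_{\alpha,\beta}=\frac{(\beta-3)(2\alpha-\beta+1)}{4}$, \[ \mathbf C_{\alpha,\beta}^2\left\|\frac{f}{r^2}\right\|_{L^2_\beta}^2\le\left\|\mathfrak L_\alpha f\right\|_{L^2_\beta}^2 . \]
   Context: For $\beta\in\mathbb{R}$, $L^2_\beta$ denotes the weighted space on $(0,\infty)$ with norm $\|g\|_{L^2_\beta}^2=\int_0^\infty |g(r)|^2 r^\beta\,dr$. For $\alpha\in\mathbb{R}$, $\mathfrak L_\alpha$ is the operator $\mathfrak L_\alpha f(r)=f''(r)+\frac{\alpha}{r}f'(r)$. Expressions such as $f/r^2$ denote the function $r\mapsto f(r)/r^2$. *)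

(* Defs.v *)
From Stdlib Require Import Reals.
From Coquelicot Require Import Coquelicot.
Open Scope R_scope.

Definition smooth_R (g : R -> R) : Prop :=
  forall (n : nat) (x : R), ex_derive (Derive_n g n) x.

Definition smooth_C (f : R -> C) : Prop :=
  smooth_R (fun r => Re (f r)) /\ smooth_R (fun r => Im (f r)).

(* f in C_0^infty((0,oo)) (extended by 0 to all of R): smooth with support
   contained in a compact interval [a,b] with 0 < a. *)
Definition C0inf_pos (f : R -> C) : Prop :=
  smooth_C f /\
  exists a b : R, 0 < a /\ a <= b /\
    forall r : R, (r < a \/ b < r) -> f r = 0%C.

Definition DerC (f : R -> C) (r : R) : C :=
  (Derive (fun s => Re (f s)) r, Derive (fun s => Im (f s)) r).

Definition Lop (alpha : R) (f : R -> C) (r : R) : C :=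
  (DerC (DerC f) r + (alpha / r : C) * DerC f r)%C.

Definition L2w_sq (beta : R) (g : R -> C) : R :=
  RInt_gen (fun r => (Cmod (g r))^2 * Rpower r beta)
           (at_right 0) (Rbar_locally p_infty).

Definition Cab (alpha beta : R) : R := (beta - 3) * (2 * alpha - beta + 1) / 4.

(* Main.v *)
Require Import Defs.
From Stdlib Require Import Reals Lra.
From Coquelicot Require Import Coquelicot.
Open Scope R_scope.

Lemma cont_plus (f g : R -> R) x : continuous f x -> continuous g x -> continuous (fun y => f y + g y) x.
Proof. apply (continuous_plus f g). Qed.
Lemma cont_mult (f g : R -> R) x : continuous f x -> continuous g x -> continuous (fun y => f y * g y) x.
Proof. apply (continuous_mult f g). Qed.
Lemma cont_minus (f g : R -> R) x : continuous f x -> continuous g x -> continuous (fun y => f y - g y) x.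
Proof. apply (continuous_minus f g). Qed.
Lemma cont_pow (f : R -> R) n x : continuous f x -> continuous (fun y => f y ^ n) x.
Proof. intros H. induction n; simpl. apply continuous_const. apply cont_mult; auto. Qed.
Lemma cont_Rpower c x : 0 < x -> continuous (fun y => Rpower y c) x.
Proof. intros. apply (ex_derive_continuous (fun y => Rpower y c)). unfold Rpower. auto_derive. lra. Qed.
Lemma cont_divc c x : x <> 0 -> continuous (fun y => c / y) x.
Proof. intros. apply (ex_derive_continuous (fun y => c / y)). auto_derive. auto. Qed.

Ltac cont := repeat match goal with
 | |- continuous (fun _ => ?c) _ => apply continuous_const
 | |- continuous (fun y => y) _ => apply continuous_id
 | |- continuous (fun y => @?f y + @?g y) _ => apply (cont_plus f g)
 | |- continuous (fun y => @?f y - @?g y) _ => apply (cont_minus f g)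
 | |- continuous (fun y => @?f y * @?g y) _ => apply (cont_mult f g)
 | |- continuous (fun y => @?f y ^ ?n) _ => apply (cont_pow f n)
 | |- _ => solve [auto]
 end.


Lemma Rpow_m3 x be : 0 < x -> Rpower x (be-3) = Rpower x (be-4) * x.
Proof. intros. replace (be-3) with ((be-4)+1) by ring. rewrite Rpower_plus, Rpower_1; auto. Qed.
Lemma Rpow_0 x be : 0 < x -> Rpower x be = Rpower x (be-4) * x^4.
Proof. intros. replace be with ((be-4)+INR 4) at 1 by (simpl; ring).
 rewrite Rpower_plus, Rpower_pow; auto. Qed.

Lemma real_key (al be a b : R) (u : R -> R) :
 0 < a -> a < b ->
 (forall x, ex_derive u x) -> (forall x, ex_derive (Derive u) x) ->
 (forall x, continuous (Derive (Derive u)) x) ->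
 u a = 0 -> Derive u a = 0 -> u b = 0 -> Derive u b = 0 ->
 (Cab al be)^2 * RInt (fun r => (u r)^2 * Rpower r (be-4)) a b
 <= RInt (fun r => (Derive (Derive u) r + al / r * Derive u r)^2 * Rpower r be) a b.
Proof.
intros Ha Hab Du DDu CDDu Hua Hdua Hub Hdub.
set (g := (3-be)/2). set (bb := 2 - be + al). set (cc := g*(g-1+al)).
set (F := fun r => (bb*(r*Derive u r - g*u r)^2 + 2*cc*u r*(r*Derive u r - g*u r) + bb*cc*(u r)^2) * exp ((be-3) * ln r)).
set (E := fun r => (bb*2*(r*Derive u r - g*u r)*(Derive u r + r*Derive (Derive u) r - g*Derive u r)
   + 2*cc*(Derive u r*(r*Derive u r - g*u r) + u r*(Derive u r + r*Derive (Derive u) r - g*Derive u r))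
   + 2*bb*cc*u r*Derive u r) * Rpower r (be-3)
   + (bb*(r*Derive u r - g*u r)^2 + 2*cc*u r*(r*Derive u r - g*u r) + bb*cc*(u r)^2) * ((be-3) * Rpower r (be-4))).
assert (Cu : forall x, continuous u x) by (intros; apply (ex_derive_continuous u); auto).
assert (CDu : forall x, continuous (Derive u) x) by (intros; apply (ex_derive_continuous (Derive u)); auto).
assert (Hbnd : forall x, Rmin a b <= x <= Rmax a b -> 0 < x).
{ intros x Hx. rewrite Rmin_left in Hx by lra. lra. }
assert (HE : is_RInt E a b 0).
{ replace 0 with (minus (F b) (F a)).
  2:{ unfold F. rewrite Hub, Hdub, Hua, Hdua. unfold minus, plus, opp. simpl. ring. }
  apply (is_RInt_derive F E).
  - intros x Hx. specialize (Hbnd x Hx). unfold F, E. auto_derive.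
    + repeat split; auto.
    + unfold Rpower.
      assert (H1: exp ((be-3)*ln x) = exp ((be-4)*ln x) * x).
      { replace ((be-3)*ln x) with ((be-4)*ln x + ln x) by ring. rewrite exp_plus, exp_ln; auto. }
      rewrite H1. assert (Ee1 : Derive (fun y => u y) x = Derive u x) by reflexivity. assert (Ee2 : Derive (fun y => Derive u y) x = Derive (Derive u) x) by reflexivity. rewrite Ee1, Ee2. field. lra.
  - intros x Hx. specialize (Hbnd x Hx). unfold E.
    assert (continuous (fun y => Rpower y (be-3)) x) by (apply cont_Rpower; auto).
    assert (continuous (fun y => Rpower y (be-4)) x) by (apply cont_Rpower; auto).
    cont. }
assert (ExK : ex_RInt (fun r => (u r)^2 * Rpower r (be-4)) a b).
{ apply (ex_RInt_continuous (fun r => (u r)^2 * Rpower r (be-4))). intros x Hx. specialize (Hbnd x Hx).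
  assert (continuous (fun y => Rpower y (be-4)) x) by (apply cont_Rpower; auto). cont. }
assert (ExH : ex_RInt (fun r => (Derive (Derive u) r + al / r * Derive u r)^2 * Rpower r be) a b).
{ apply (ex_RInt_continuous (fun r => (Derive (Derive u) r + al / r * Derive u r)^2 * Rpower r be)). intros x Hx. specialize (Hbnd x Hx).
  assert (continuous (fun y => Rpower y be) x) by (apply cont_Rpower; auto).
  assert (continuous (fun y => al / y) x) by (apply cont_divc; lra). cont. }
assert (Eq : RInt (fun r => (Cab al be)^2 * ((u r)^2 * Rpower r (be-4)) + E r) a b
   = (Cab al be)^2 * RInt (fun r => (u r)^2 * Rpower r (be-4)) a b).
{ apply (@is_RInt_unique R_CompleteNormedModule (fun r => (Cab al be)^2 * ((u r)^2 * Rpower r (be-4)) + E r)).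
  replace ((Cab al be)^2 * RInt (fun r => (u r)^2 * Rpower r (be-4)) a b) with
    (plus (scal ((Cab al be)^2) (RInt (fun r => (u r)^2 * Rpower r (be-4)) a b)) 0)
    by (unfold plus, scal; simpl; unfold mult; simpl; ring).
  apply (@is_RInt_plus R_NormedModule (fun r => scal ((Cab al be)^2) ((u r)^2 * Rpower r (be-4))) E).
  apply (@is_RInt_scal R_NormedModule (fun r => (u r)^2 * Rpower r (be-4))). apply (@RInt_correct R_CompleteNormedModule (fun r => (u r)^2 * Rpower r (be-4))); auto. exact HE. }
apply Rle_trans with (1 := Req_le _ _ (eq_sym Eq)).
apply (RInt_le (fun r => (Cab al be)^2 * ((u r)^2 * Rpower r (be-4)) + E r)
   (fun r => (Derive (Derive u) r + al / r * Derive u r)^2 * Rpower r be) a b).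
- left; exact Hab.
- exists ((Cab al be)^2 * RInt (fun r => (u r)^2 * Rpower r (be-4)) a b).
  rewrite <- Eq. apply (@RInt_correct R_CompleteNormedModule).
  apply (@ex_RInt_plus R_NormedModule (fun r => scal ((Cab al be)^2) ((u r)^2 * Rpower r (be-4))) E).
  apply (@ex_RInt_scal R_NormedModule (fun r => (u r)^2 * Rpower r (be-4))). exact ExK. exists 0; exact HE.
- auto.
- intros x Hx. assert (Hx0 : 0 < x) by lra. unfold E; cbv beta.
  rewrite (Rpow_0 x be), (Rpow_m3 x be) by auto.
  assert (Ht : 0 < Rpower x (be-4)) by (unfold Rpower; apply exp_pos).
  set (t := Rpower x (be-4)) in *.
  set (u0 := u x) in *. set (u1 := Derive u x) in *. set (u2 := Derive (Derive u) x) in *.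
  set (A := x^2*u2 + (1-2*g)*x*u1 + g^2*u0).
  set (B := x*u1 - g*u0).
  assert (Id : (u2 + al / x * u1) ^ 2 * (t * x ^ 4) - ((Cab al be)^2 * (u0^2 * t) +
     ((bb*2*B*(u1 + x*u2 - g*u1)
   + 2*cc*(u1*B + u0*(u1 + x*u2 - g*u1))
   + 2*bb*cc*u0*u1) * (t*x)
   + (bb*B^2 + 2*cc*u0*B + bb*cc*(u0)^2) * ((be-3) * t)))
   = t * (A^2 + ((g-1+al)^2 + g^2) * B^2)).
  { unfold A, B, Cab, cc, bb, g. field. lra. }
  assert (0 <= t * (A^2 + ((g-1+al)^2 + g^2) * B^2)).
  { apply Rmult_le_pos. lra. 
    assert (0 <= A^2) by apply pow2_ge_0. assert (0 <= B^2) by apply pow2_ge_0.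
    assert (0 <= (g-1+al)^2) by apply pow2_ge_0. assert (0 <= g^2) by apply pow2_ge_0. nra. }
  lra.
Qed.
Lemma RInt_gen_supp (h : R -> R) a b : 0 < a -> a < b -> ex_RInt h a b ->
  (forall r, 0 < r < a \/ b < r -> h r = 0) ->
  RInt_gen h (at_right 0) (Rbar_locally p_infty) = RInt h a b.
Proof.
intros Ha Hab Hex Hz.
apply (@is_RInt_gen_unique R_CompleteNormedModule (at_right 0) (Rbar_locally p_infty) _ _ h (RInt h a b)).
unfold is_RInt_gen. apply filterlimi_lim_ext_loc with (f := fun _ => RInt h a b).
- apply Filter_prod with (Q := fun x => 0 < x < a) (R := fun y => b < y).
  + exists (mkposreal a Ha). intros y Hy Hy0. simpl in *.
    unfold ball in Hy; simpl in Hy; unfold AbsRing_ball, abs, minus, plus, opp in Hy; simpl in Hy.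
    apply Rabs_lt_between' in Hy. lra.
  + exists b. intros; lra.
  + intros x y Hx Hy. simpl.
    assert (Z : forall c d, 0 < c -> c <= d -> (d <= a \/ b <= c) -> is_RInt h c d 0).
    { intros c d Hc Hcd Hd.
      apply (is_RInt_ext (fun _ => 0)).
      - intros t Ht. rewrite Rmin_left, Rmax_right in Ht by lra. symmetry. apply Hz. lra.
      - assert (H0 := is_RInt_const c d (0:R)).
        unfold scal in H0; simpl in H0; unfold mult in H0; simpl in H0; rewrite Rmult_0_r in H0. exact H0. }
    replace (RInt h a b) with (plus (plus 0 (RInt h a b)) 0)
      by (unfold plus; simpl; ring).
    apply (@is_RInt_Chasles R_NormedModule h x b y); [apply (@is_RInt_Chasles R_NormedModule h x a b)|].
    * apply Z; lra.
    * apply (@RInt_correct R_CompleteNormedModule); auto.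
    * apply Z; lra.
- apply filterlim_const.
Qed.

Lemma ex_K (be a b : R) (u : R -> R) : 0 < a -> a < b ->
 (forall x, continuous u x) -> ex_RInt (fun r => (u r)^2 * Rpower r (be-4)) a b.
Proof.
intros Ha Hab Cu.
apply (ex_RInt_continuous (fun r => (u r)^2 * Rpower r (be-4))). intros x Hx.
rewrite Rmin_left in Hx by lra. assert (0 < x) by lra.
assert (continuous (fun y => Rpower y (be-4)) x) by (apply cont_Rpower; auto). cont.
Qed.

Lemma ex_H (al be a b : R) (u : R -> R) : 0 < a -> a < b ->
 (forall x, continuous (Derive u) x) -> (forall x, continuous (Derive (Derive u)) x) ->
 ex_RInt (fun r => (Derive (Derive u) r + al / r * Derive u r)^2 * Rpower r be) a b.
Proof.
intros Ha Hab CDu CDDu.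
apply (ex_RInt_continuous (fun r => (Derive (Derive u) r + al / r * Derive u r)^2 * Rpower r be)). intros x Hx.
rewrite Rmin_left in Hx by lra. assert (0 < x) by lra.
assert (continuous (fun y => Rpower y be) x) by (apply cont_Rpower; auto).
assert (continuous (fun y => al / y) x) by (apply cont_divc; lra). cont.
Qed.

Lemma zero_derivs (u : R -> R) a b : (forall r, r < a \/ b < r -> u r = 0) ->
  forall r, r < a \/ b < r -> Derive u r = 0 /\ Derive (Derive u) r = 0.
Proof.
intros Hz.
assert (L : forall r, r < a \/ b < r -> locally r (fun t => t < a \/ b < t)).
{ intros r [Hr|Hr].
  - apply filter_imp with (fun t => t < a). intros; left; auto. apply (open_lt a r Hr).
  - apply filter_imp with (fun t => b < t). intros; right; auto. apply (open_gt b r Hr). }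
assert (D1 : forall r, r < a \/ b < r -> Derive u r = 0).
{ intros r Hr. rewrite (Derive_ext_loc u (fun _ => 0)). apply Derive_const.
  apply filter_imp with (2 := L r Hr). intros t Ht. apply Hz; auto. }
intros r Hr. split. apply D1; auto.
rewrite (Derive_ext_loc (Derive u) (fun _ => 0)). apply Derive_const.
apply filter_imp with (2 := L r Hr). intros t Ht. apply D1; auto.
Qed.

Lemma Lop_cmod al f r : r <> 0 -> Cmod (Lop al f r)^2 =
  (Derive (Derive (fun s => Re (f s))) r + al/r * Derive (fun s => Re (f s)) r)^2
 + (Derive (Derive (fun s => Im (f s))) r + al/r * Derive (fun s => Im (f s)) r)^2.
Proof.
intros Hr.
unfold Lop, DerC, Cmod. rewrite pow2_sqrt by (apply Rplus_le_le_0_compat; apply pow2_ge_0).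
simpl.
assert (E1: Derive (fun s => Derive (fun s0 => Re (f s0)) s) r = Derive (Derive (fun s => Re (f s))) r) by reflexivity.
assert (E2: Derive (fun s => Derive (fun s0 => Im (f s0)) s) r = Derive (Derive (fun s => Im (f s))) r) by reflexivity.
rewrite E1, E2. field. auto.
Qed.

Lemma pt_L (f : R -> C) x be : 0 < x ->
  (Cmod ((f x / ((x^2)%R : C))%C))^2 * Rpower x be
  = (Re (f x))^2 * Rpower x (be-4) + (Im (f x))^2 * Rpower x (be-4).
Proof.
intros Hx.
assert (Hn : ((x^2)%R : C) <> 0%C).
{ intros H. apply (f_equal Re) in H. simpl in H. nra. }
rewrite Cmod_div by auto. rewrite Cmod_R, Rabs_pos_eq by (apply pow2_ge_0).
rewrite Rpow_0 by auto.
unfold Cmod. set (S := fst (f x) ^ 2 + snd (f x) ^ 2).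
assert (HS : sqrt S ^ 2 = S) by (apply pow2_sqrt; unfold S; nra).
set (s := sqrt S) in *. set (t := Rpower x (be-4)).
transitivity (s^2 * t). field. lra.
rewrite HS. unfold S, Re, Im. ring.
Qed.

Theorem theorem1p3 (alpha beta : R) (f : R -> C) :
  C0inf_pos f ->
  (Cab alpha beta)^2 * L2w_sq beta (fun r => (f r / ((r^2)%R : C))%C)
    <= L2w_sq beta (Lop alpha f).
Proof.
intros [[Su Sv] [a [b [Ha [Hab Hz]]]]].
assert (Zr : forall r, r < a \/ b < r -> Re (f r) = 0) by (intros r Hr; rewrite Hz; auto).
assert (Zi : forall r, r < a \/ b < r -> Im (f r) = 0) by (intros r Hr; rewrite Hz; auto).
assert (ZDr := zero_derivs (fun s => Re (f s)) a b Zr).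
assert (ZDi := zero_derivs (fun s => Im (f s)) a b Zi).
assert (H1 : 0 < a/2) by lra. assert (H2 : a/2 < b+1) by lra.
assert (Ea : a/2 < a \/ b < a/2) by lra. assert (Eb : b+1 < a \/ b < b+1) by lra.
assert (CDDr : forall x, continuous (Derive (Derive (fun s => Re (f s)))) x).
{ intros x. apply (ex_derive_continuous (Derive (Derive (fun s => Re (f s))))). exact (Su 2%nat x). }
assert (CDDi : forall x, continuous (Derive (Derive (fun s => Im (f s)))) x).
{ intros x. apply (ex_derive_continuous (Derive (Derive (fun s => Im (f s))))). exact (Sv 2%nat x). }
assert (CDr : forall x, continuous (Derive (fun s => Re (f s))) x).
{ intros x. apply (ex_derive_continuous (Derive (fun s => Re (f s)))). exact (Su 1%nat x). }
assert (CDi : forall x, continuous (Derive (fun s => Im (f s))) x).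
{ intros x. apply (ex_derive_continuous (Derive (fun s => Im (f s)))). exact (Sv 1%nat x). }
assert (Cr : forall x, continuous (fun s => Re (f s)) x).
{ intros x. apply (ex_derive_continuous (fun s => Re (f s))). exact (Su 0%nat x). }
assert (Ci : forall x, continuous (fun s => Im (f s)) x).
{ intros x. apply (ex_derive_continuous (fun s => Im (f s))). exact (Sv 0%nat x). }
assert (KR := real_key alpha beta (a/2) (b+1) (fun s => Re (f s)) H1 H2
   (fun x => Su 0%nat x) (fun x => Su 1%nat x) CDDr
   (Zr _ Ea) (proj1 (ZDr _ Ea)) (Zr _ Eb) (proj1 (ZDr _ Eb))).
assert (KI := real_key alpha beta (a/2) (b+1) (fun s => Im (f s)) H1 H2
   (fun x => Sv 0%nat x) (fun x => Sv 1%nat x) CDDi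
   (Zi _ Ea) (proj1 (ZDi _ Ea)) (Zi _ Eb) (proj1 (ZDi _ Eb))).
assert (XKr := ex_K beta (a/2) (b+1) (fun s => Re (f s)) H1 H2 Cr).
assert (XKi := ex_K beta (a/2) (b+1) (fun s => Im (f s)) H1 H2 Ci).
assert (XHr := ex_H alpha beta (a/2) (b+1) (fun s => Re (f s)) H1 H2 CDr CDDr).
assert (XHi := ex_H alpha beta (a/2) (b+1) (fun s => Im (f s)) H1 H2 CDi CDDi).
cbv beta in KR, KI, XKr, XKi, XHr, XHi.
assert (EL : L2w_sq beta (fun r => (f r / ((r^2)%R : C))%C) =
  RInt (fun r => (Re (f r))^2 * Rpower r (beta-4)) (a/2) (b+1) +
  RInt (fun r => (Im (f r))^2 * Rpower r (beta-4)) (a/2) (b+1)).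
{ assert (Ext : forall x, Rmin (a/2) (b+1) < x < Rmax (a/2) (b+1) ->
     (Cmod ((f x / ((x^2)%R : C))%C))^2 * Rpower x beta =
     (Re (f x))^2 * Rpower x (beta-4) + (Im (f x))^2 * Rpower x (beta-4)).
  { intros x Hx. rewrite Rmin_left in Hx by lra. apply pt_L. lra. }
  unfold L2w_sq.
  rewrite (RInt_gen_supp _ (a/2) (b+1)); auto.
  - transitivity (RInt (fun r => (Re (f r))^2 * Rpower r (beta-4) + (Im (f r))^2 * Rpower r (beta-4)) (a/2) (b+1)).
    + apply RInt_ext. exact Ext.
    + apply (@RInt_plus R_CompleteNormedModule (fun r => (Re (f r))^2 * Rpower r (beta-4)) (fun r => (Im (f r))^2 * Rpower r (beta-4))); auto.
  - apply (ex_RInt_ext (fun r => (Re (f r))^2 * Rpower r (beta-4) + (Im (f r))^2 * Rpower r (beta-4))).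
    + intros x Hx. symmetry. apply Ext. auto.
    + apply (@ex_RInt_plus R_NormedModule (fun r => (Re (f r))^2 * Rpower r (beta-4)) (fun r => (Im (f r))^2 * Rpower r (beta-4))); auto.
  - intros r Hr. assert (Hr0 : 0 < r) by lra. rewrite Hz by lra.
    assert (Hn : ((r^2)%R : C) <> 0%C).
    { intros H. apply (f_equal Re) in H. simpl in H. nra. }
    rewrite Cmod_div by auto. rewrite Cmod_0. unfold Rdiv. ring. }
assert (ER : L2w_sq beta (Lop alpha f) =
  RInt (fun r => (Derive (Derive (fun s => Re (f s))) r + alpha / r * Derive (fun s => Re (f s)) r)^2 * Rpower r beta) (a/2) (b+1) +
  RInt (fun r => (Derive (Derive (fun s => Im (f s))) r + alpha / r * Derive (fun s => Im (f s)) r)^2 * Rpower r beta) (a/2) (b+1)).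
{ assert (Ext : forall x, Rmin (a/2) (b+1) < x < Rmax (a/2) (b+1) ->
     (Cmod (Lop alpha f x))^2 * Rpower x beta =
     (Derive (Derive (fun s => Re (f s))) x + alpha / x * Derive (fun s => Re (f s)) x)^2 * Rpower x beta +
     (Derive (Derive (fun s => Im (f s))) x + alpha / x * Derive (fun s => Im (f s)) x)^2 * Rpower x beta).
  { intros x Hx. rewrite Rmin_left in Hx by lra. rewrite Lop_cmod by lra. ring. }
  unfold L2w_sq.
  rewrite (RInt_gen_supp _ (a/2) (b+1)); auto.
  - transitivity (RInt (fun r => (Derive (Derive (fun s => Re (f s))) r + alpha / r * Derive (fun s => Re (f s)) r)^2 * Rpower r beta +
     (Derive (Derive (fun s => Im (f s))) r + alpha / r * Derive (fun s => Im (f s)) r)^2 * Rpower r beta) (a/2) (b+1)).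
    + apply RInt_ext. exact Ext.
    + apply (@RInt_plus R_CompleteNormedModule (fun r => (Derive (Derive (fun s => Re (f s))) r + alpha / r * Derive (fun s => Re (f s)) r)^2 * Rpower r beta) (fun r => (Derive (Derive (fun s => Im (f s))) r + alpha / r * Derive (fun s => Im (f s)) r)^2 * Rpower r beta)); auto.
  - apply (ex_RInt_ext (fun r => (Derive (Derive (fun s => Re (f s))) r + alpha / r * Derive (fun s => Re (f s)) r)^2 * Rpower r beta +
     (Derive (Derive (fun s => Im (f s))) r + alpha / r * Derive (fun s => Im (f s)) r)^2 * Rpower r beta)).
    + intros x Hx. symmetry. apply Ext. auto.
    + apply (@ex_RInt_plus R_NormedModule (fun r => (Derive (Derive (fun s => Re (f s))) r + alpha / r * Derive (fun s => Re (f s)) r)^2 * Rpower r beta) (fun r => (Derive (Derive (fun s => Im (f s))) r + alpha / r * Derive (fun s => Im (f s)) r)^2 * Rpower r beta)); auto.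
  - intros r Hr. assert (Hr0 : 0 < r) by lra.
    assert (Hr1 : r < a \/ b < r) by lra.
    rewrite Lop_cmod by lra.
    destruct (ZDr r Hr1) as [A1 A2]. destruct (ZDi r Hr1) as [B1 B2].
    rewrite A1, A2, B1, B2. ring. }
rewrite EL, ER. rewrite Rmult_plus_distr_l. apply Rplus_le_compat; auto.
Qed.
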